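(* For every $n\in\mathbb{N}$ and every $u\in\mathbb{N}_0$ there exists a spidernet with data $(2n,\,n+1+u,\,n)$ if and only if $u\le 2n-1$.
   Context: A rooted graph is $(V,A,o)$ with $V$ countable, $o\in V$, $A:V\times V\to\{0,1\}$ symmetric with $A_{xx}=0$; $x\sim y$ iff $A_{xy}=1$. For a connected rooted graph let $d(x,y)$ be the graph distance and, for $\varepsilon\in\{-1,0,1\}$, $\omega_\varepsilon(x)=|\{y\in V: y\sim x,\ d(o,y)=d(o,x)+\varepsilon\}|$. For $a\in\mathbb{N}$, $b\in\mathbb{N}\setminus\{1\}$, $c\in\mathbb{N}$ with $c\le b-1$, a spidernet with data $(a,b,c)$ is a connected rooted graph with $\omega_{+1}(o)=a$, $\omega_{-1}(o)=\omega_0(o)=0$, and $\omega_{+1}(x)=c$, $\omega_{-1}(x)=1$, $\omega_0(x)=b-1-c$ for all $x\in V\setminus\{o\}$. *)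

(* Defs.v *)
From HB Require Import structures.
From mathcomp Require Import all_boot all_order all_algebra.
Set Implicit Arguments. Unset Strict Implicit. Unset Printing Implicit Defensive.
Import GRing.Theory Num.Theory.

Section Spidernet.
Variable V : countType.
Variable A : rel V.

Definition rooted_graph : Prop := (forall x y, A x y = A y x) /\ (forall x, A x x = false).

Definition walk_len (x y : V) (k : nat) : Prop :=
  exists s : seq V, [/\ path A x s, last x s = y & size s = k].

Definition connected : Prop := forall x y : V, exists k, walk_len x y k.

Definition gdist (x y : V) (k : nat) : Prop :=
  walk_len x y k /\ forall j, (j < k)%N -> ~ walk_len x y j.

Definition card_is (P : V -> Prop) (c : nat) : Prop :=
  exists s : seq V, [/\ uniq s, size s = c & forall y, y \in s <-> P y].

Definition omega_is (o : V) (eps : int) (x : V) (c : nat) : Prop :=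
  card_is (fun y => A y x /\ exists kx ky : nat,
             [/\ gdist o x kx, gdist o y ky & (ky%:Z = kx%:Z + eps)%R]) c.

Definition spidernet (o : V) (a b c : nat) : Prop :=
  [/\ (1 <= a)%N /\ (2 <= b)%N /\ (c <= b - 1)%N, rooted_graph, connected,
      [/\ omega_is o 1%R o a, omega_is o (-1)%R o 0 & omega_is o 0%R o 0]
    & forall x, x <> o ->
        [/\ omega_is o 1%R x c, omega_is o (-1)%R x 1 & omega_is o 0%R x (b - 1 - c)]].
End Spidernet.

(* Main.v *)
Require Import Defs.
From HB Require Import structures.
From mathcomp Require Import all_boot all_order all_algebra zify.
Import GRing.Theory.
Set Implicit Arguments. Unset Strict Implicit. Unset Printing Implicit Defensive.

Section Gen.
Variable G : finZmodType.
Variable k : nat.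
Variable S : seq G.
Hypothesis Suniq : uniq S.
Hypothesis S0 : (0%R \notin S).
Hypothesis SN : forall s, s \in S -> (- s)%R \in S.

Definition VV : countType := option (G * seq 'I_k).

Definition par (g : G) (w : seq 'I_k) : seq VV :=
  match w with [::] => [:: None] | _ :: w' => [:: Some (g, w')] end.
Definition chl (g : G) (w : seq 'I_k) : seq VV := [seq Some (g, j :: w) | j <- enum 'I_k].
Definition sam (g : G) (w : seq 'I_k) : seq VV := [seq Some ((g + s)%R, w) | s <- S].

Definition nbrs (x : VV) : seq VV :=
  match x with
  | None => [seq Some (g, [::]) | g <- enum G]
  | Some (g, w) => par g w ++ chl g w ++ sam g w
  end.

Definition AA : rel VV := fun x y => y \in nbrs x.

Definition lvl (x : VV) : nat := if x is Some (_, w) then (size w).+1 else 0.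

Lemma lvl_par g w y : y \in par g w -> (lvl y).+1 = (size w).+1.
Proof. by case: w => [|j w] /=; rewrite inE => /eqP ->. Qed.
Lemma lvl_chl g w y : y \in chl g w -> lvl y = (size w).+2.
Proof. by case/mapP => j _ ->. Qed.
Lemma lvl_sam g w y : y \in sam g w -> lvl y = (size w).+1.
Proof. by case/mapP => j _ ->. Qed.
Lemma lvl_root y : y \in nbrs None -> lvl y = 1.
Proof. by case/mapP => j _ ->. Qed.

Lemma AA_sym_imp x y : AA x y -> AA y x.
Proof.
rewrite /AA; case: x => [[g w]|] /=.
- rewrite !mem_cat => /or3P [].
  + case: w => [|j w] /=; rewrite inE => /eqP ->/=.
      by apply/mapP; exists g; rewrite ?mem_enum.
    rewrite !mem_cat; apply/or3P; apply: Or32; apply/mapP; exists j; rewrite ?mem_enum //.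
  + case/mapP => j _ -> /=; by rewrite inE eqxx.
  + case/mapP => s Hs -> /=; rewrite !mem_cat; apply/or3P; apply: Or33.
    apply/mapP; exists (- s)%R; first exact: SN.
    by rewrite addrK.
- case/mapP => g _ -> /=; by rewrite inE eqxx.
Qed.

Lemma AA_sym x y : AA x y = AA y x.
Proof. by apply/idP/idP; apply: AA_sym_imp. Qed.

Lemma AA_irr x : AA x x = false.
Proof.
apply/negP; rewrite /AA; case: x => [[g w]|] /=.
- rewrite !mem_cat => /or3P [].
  + move/lvl_par => /=; lia.
  + move/lvl_chl => /=; lia.
  + case/mapP => s Hs [] E; have E0 : s = 0%R by apply: (addrI g); rewrite addr0 -E.
    by move: S0; rewrite -E0 Hs.
- by case/mapP.
Qed.

Lemma lvl_up x y : AA x y -> lvl y <= (lvl x).+1.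
Proof.
rewrite /AA; case: x => [[g w]|] /=.
- rewrite !mem_cat => /or3P [].
  + move/lvl_par => /=; lia.
  + move/lvl_chl => /=; lia.
  + move/lvl_sam => /=; lia.
- move/lvl_root; lia.
Qed.

Lemma path_lvl x s : path AA x s -> lvl (last x s) <= lvl x + size s.
Proof.
elim: s x => [|y s IH] x /=; first by rewrite addn0.
case/andP => Hxy Hp; apply: leq_trans (IH _ Hp) _; rewrite addnS -addSn leq_add2r; exact: lvl_up.
Qed.

Lemma walk_down g w : walk_len AA None (Some (g, w)) (size w).+1.
Proof.
elim: w => [|j w [s [Hp Hl Hs]]].
- exists [:: Some (g, [::])]; split => //=; rewrite andbT /AA /=.
  by apply/mapP; exists g; rewrite ?mem_enum.
- exists (rcons s (Some (g, j :: w))); split.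
  + rewrite rcons_path Hp Hl /AA /= !mem_cat; apply/or3P; apply: Or32.
    by apply/mapP; exists j; rewrite ?mem_enum.
  + by rewrite last_rcons.
  + by rewrite size_rcons Hs.
Qed.

Lemma walk_up g w : walk_len AA (Some (g, w)) None (size w).+1.
Proof.
elim: w => [|j w [s [Hp Hl Hs]]].
- exists [:: None]; split => //=; rewrite andbT /AA /= mem_cat inE eqxx //.
- exists (Some (g, w) :: s); split => /=.
  + by rewrite Hp andbT /AA /= inE eqxx.
  + done.
  + by rewrite Hs.
Qed.

Lemma walk_cat x y z k1 k2 : walk_len AA x z k1 -> walk_len AA z y k2 -> walk_len AA x y (k1 + k2).
Proof.
move=> [s1 [H1 L1 S1]] [s2 [H2 L2 S2]]; exists (s1 ++ s2); split.
- by rewrite cat_path H1 L1 H2.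
- by rewrite last_cat L1.
- by rewrite size_cat S1 S2.
Qed.

Lemma walk_lvl x : walk_len AA None x (lvl x).
Proof. case: x => [[g w]|]; [exact: walk_down | by exists [::]]. Qed.

Lemma gdistE x kk : gdist AA None x kk <-> kk = lvl x.
Proof.
split.
- move=> [[s [Hp Hl Hs]] Hmin]; have := path_lvl Hp; rewrite Hl Hs /= => H.
  case: (ltngtP (lvl x) kk) => // Hlt.
  + by case: (Hmin _ Hlt (walk_lvl x)).
  + lia.
- move=> ->; split; first exact: walk_lvl.
  move=> j Hj [s [Hp Hl Hs]]; have := path_lvl Hp; rewrite Hl Hs /=; lia.
Qed.

Lemma card_is_eq (P Q : VV -> Prop) c : card_is P c -> (forall y, P y <-> Q y) -> card_is Q c.
Proof. move=> [s [U Sz M]] E; exists s; split => // y; rewrite M; exact: E. Qed.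

Lemma omegaE eps x c :
  card_is (fun y => AA x y /\ ((lvl y)%:Z = (lvl x)%:Z + eps)%R) c -> omega_is AA None eps x c.
Proof.
move=> H; apply: (card_is_eq H) => y; split.
- move=> [Hxy E]; split; first by rewrite AA_sym.
  by exists (lvl x), (lvl y); split => //; apply/gdistE.
- move=> [Hyx [kx [ky [/gdistE Ex /gdistE Ey E]]]]; split; first by rewrite AA_sym.
  by rewrite -Ex -Ey.
Qed.

Lemma connected_AA : connected AA.
Proof.
move=> x y; exists (lvl x + lvl y); apply: (walk_cat (z := None)); last exact: walk_lvl.
case: x => [[g w]|]; [exact: walk_up | by exists [::]].
Qed.

Lemma spider_gen : (1 <= #|G|)%N -> (2 <= k + 1 + size S)%N ->
  spidernet AA None #|G| (k + 1 + size S) k.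
Proof.
move=> HG Hb; split.
- split => //; split => //; lia.
- split; [exact: AA_sym | exact: AA_irr].
- exact: connected_AA.
- split; apply: omegaE.
  + exists (nbrs None); split.
    * rewrite map_inj_uniq ?enum_uniq // => a b [].  done.
    * by rewrite size_map cardT.
    * move=> y; split; [move=> Hy; split => //; rewrite (lvl_root Hy) /=; lia|by case].
  + exists [::]; split => // y; split => // [[_]] /=; lia.
  + exists [::]; split => // y; split => // [[H]]; rewrite (lvl_root H) /=; lia.
- case=> [[g w]|] // _; split; apply: omegaE.
  + exists (chl g w); split.
    * rewrite map_inj_uniq ?enum_uniq // => a b [] //.
    * by rewrite size_map size_enum_ord.
    * move=> y; split.
      - move=> Hy; split; first by rewrite /AA /= !mem_cat Hy orbT.
        rewrite (lvl_chl Hy) /=; lia.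
      - rewrite /AA /= !mem_cat => -[/or3P [] Hy E] //.
        + move: (lvl_par Hy) E => /=; lia.
        + move: (lvl_sam Hy) E => /=; lia.
  + exists (par g w); split.
    * by case: w.
    * by case: w.
    * move=> y; split.
      - move=> Hy; split; first by rewrite /AA /= !mem_cat Hy.
        move: (lvl_par Hy) => /=; lia.
      - rewrite /AA /= !mem_cat => -[/or3P [] Hy E] //.
        + move: (lvl_chl Hy) E => /=; lia.
        + move: (lvl_sam Hy) E => /=; lia.
  + have -> : (k + 1 + size S - 1 - k = size S)%N by lia.
    exists (sam g w); split.
    * rewrite map_inj_uniq // => a b [] /addrI //.
    * by rewrite size_map.
    * move=> y; split.
      - move=> Hy; split; first by rewrite /AA /= !mem_cat Hy !orbT.
        move: (lvl_sam Hy) => /=; lia.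
      - rewrite /AA /= !mem_cat => -[/or3P [] Hy E] //.
        + move: (lvl_par Hy) E => /=; lia.
        + move: (lvl_chl Hy) E => /=; lia.
Qed.
End Gen.

Definition II (lo hi : nat) : pred nat := fun k => (lo <= k) && (k < hi).

Lemma cntI lo hi N : count (II lo hi) (iota 0 N) = minn hi N - minn lo N.
Proof.
elim: N => [|N IH]; first by rewrite /= !minn0.
rewrite -addn1 iotaD count_cat IH /= addn0 /II; case: (leqP lo N); case: (ltnP N hi) => /=; lia.
Qed.

Lemma count_disj (T : Type) (a1 a2 : pred T) s : (forall x, a1 x -> ~~ a2 x) ->
  count (predU a1 a2) s = count a1 s + count a2 s.
Proof.
move=> D; have := count_predUI a1 a2 s.
rewrite (@eq_count _ (predI a1 a2) pred0) ?count_pred0 ?addn0 //.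
move=> x /=; case E: (a1 x) => //=; exact/negbTE/D.
Qed.

Section Zp.
Variables n u : nat.
Hypothesis hn : (1 <= n)%N.
Hypothesis hu : (u <= 2 * n - 1)%N.

Definition a := u./2.
Definition PP (k : nat) : bool := [|| II 1 a.+1 k, II (2 * n - a) (2 * n) k | odd u && II n n.+1 k].
Definition SS : seq 'Z_(2 * n) := [seq x <- enum 'Z_(2 * n) | PP (val x)].

Lemma pE : (Zp_trunc (2 * n)).+2 = 2 * n.
Proof. apply: Zp_cast; lia. Qed.

Lemma ua : u = a + a + odd u.
Proof. rewrite /a; have := odd_double_half u; rewrite -addnn; lia. Qed.

Lemma SS_uniq : uniq SS.
Proof. exact/filter_uniq/enum_uniq. Qed.

Lemma SS0 : (0%R \notin SS).
Proof.
rewrite mem_filter /= /PP /II; have := ua; case: (odd u) => /= E; lia.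
Qed.

Lemma inSS x : (x \in SS) = PP (val x).
Proof.
apply/idP/idP; first by rewrite mem_filter => /andP[].
move=> H; rewrite mem_filter H /=; exact: mem_enum.
Qed.

Lemma PPN k : PP k -> k < 2 * n -> PP ((2 * n - k) %% (2 * n)).
Proof.
rewrite /PP /II => H Hs.
have Hs0 : 0 < k by move: H; have := ua; case: (odd u) => /=; lia.
rewrite modn_small; last lia.
move: H; have := ua; case: (odd u) => /=; lia.
Qed.

Lemma SSN s : s \in SS -> (- s)%R \in SS.
Proof.
rewrite !inSS.
have -> : val (- s)%R = ((Zp_trunc (2 * n)).+2 - val s) %% (Zp_trunc (2 * n)).+2 by [].
move=> H; have Hv : val s < 2 * n := leq_trans (ltn_ord s) (eq_leq pE).
have E : forall p, p = 2 * n -> PP ((p - val s) %% p) by move=> p ->; exact: PPN.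
exact: E pE.
Qed.

Lemma SS_size : size SS = u.
Proof.
rewrite size_filter -(count_map val PP).
have -> : [seq val x | x <- enum 'Z_(2 * n)] = iota 0 (2 * n).
  by rewrite -pE val_enum_ord.
have E := ua; case Ho: (odd u) E => E.
- rewrite /PP (eq_count (a2 := predU (II 1 a.+1) (predU (II (2 * n - a) (2 * n)) (II n n.+1)))); last first.
    by move=> x; rewrite /PP Ho.
  rewrite !count_disj; last first.
    move=> x; rewrite /II /=; lia.
    move=> x; rewrite /II /=; lia.
  rewrite !cntI; lia.
- rewrite /PP (eq_count (a2 := predU (II 1 a.+1) (II (2 * n - a) (2 * n)))); last first.
    by move=> x; rewrite /PP Ho /= orbF.
  rewrite !count_disj; last first.
    move=> x; rewrite /II /=; lia.
  rewrite !cntI; lia.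
Qed.

Lemma card_Z : #|'Z_(2 * n)| = 2 * n.
Proof. by rewrite card_ord pE. Qed.
End Zp.

Lemma gdist_uniq (V : countType) (A : rel V) x y k1 k2 :
  gdist A x y k1 -> gdist A x y k2 -> k1 = k2.
Proof.
move=> [W1 M1] [W2 M2]; case: (ltngtP k1 k2) => // H.
- by case: (M2 _ H W1).
- by case: (M1 _ H W2).
Qed.

Lemma gdist_self (V : countType) (A : rel V) x : gdist A x x 0.
Proof. by split; [exists [::] | ]. Qed.

Lemma necessity (V : countType) (A : rel V) (o : V) n u :
  spidernet A o (2 * n) (n + 1 + u) n -> (u <= 2 * n - 1)%N.
Proof.
move=> [[Ha _] [Asym Airr] _ [[s0 [U0 S0 M0]] _ _] Hx].
case: s0 U0 S0 M0 => [|x s0] U0 S0 M0; first by move: Ha; rewrite -S0.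
have [Axo [kx [ky [Gox Goy E]]]] := (M0 x).1 (mem_head _ _).
have kx0 : kx = 0 := gdist_uniq Gox (gdist_self A o).
have ky1 : ky = 1 by move: E; rewrite kx0; lia.
subst kx ky.
have xo : x <> o by move=> Exo; move: Axo; rewrite Exo Airr.
have [_ _ [s1 [U1 S1 M1]]] := Hx x xo.
have Hsub : {subset x :: s1 <= x :: s0}.
  move=> y; rewrite inE => /orP [/eqP -> | Hy]; first exact: mem_head.
  have [Ayx [kx' [ky' [Gx Gy E']]]] := (M1 y).1 Hy.
  have kx1 : kx' = 1 := gdist_uniq Gx Goy.
  have ky1 : ky' = 1 by move: E'; rewrite kx1; lia.
  subst kx' ky'.
  apply/(M0 y).2; split.
  - case: Gy => [[s [Hp Hl Hs]] _]; case: s Hp Hl Hs => [|z [|z' s]] //= Hp Hl _.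
    by move: Hp; rewrite andbT Hl Asym.
  - by exists 0, 1; split => //; exact: gdist_self.
have Hu : uniq (x :: s1).
  rewrite /= U1 andbT; apply/negP => /M1 [Axx _]; by rewrite Airr in Axx.
have := uniq_leq_size Hu Hsub; rewrite /= S1 -S0 /=; lia.
Qed.

Theorem mainTheorem8 (n u : nat) (hn : (1 <= n)%N) :
  (exists (V : countType) (A : rel V) (o : V),
      spidernet A o (2 * n) (n + 1 + u) n)
  <-> (u <= 2 * n - 1)%N.
Proof.
split; first by move=> [V [A [o H]]]; exact: necessity H.
move=> hu.
exists (VV 'Z_(2 * n) n), (AA (SS n u)), None.
have := spider_gen (SS_uniq n u) (@SS0 n u hn hu) (@SSN n u hn hu).
rewrite (SS_size hn hu) (card_Z hn hu); apply; lia.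
Qed.
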